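(* For every $q=2^l$ with $l\ge3$ there is a quantum CSS code over $\mathbb F_q$ of length $n=3q/4$, dimension $q/4$ and distance at least $\lfloor q/3\rfloor-q/4+1$, together with an orthonormal basis $\{|\bar x\rangle: x\in\mathbb F_q^{q/4}\}$ of its code space, such that for all $x,y,z\in\mathbb F_q^{q/4}$, $$\big(\mathsf{CCZ}^{(q)}\big)^{\otimes n}|\bar x\rangle|\bar y\rangle|\bar z\rangle=(-1)^{\mathrm{tr}\left(\sum_{i=1}^{q/4}x_iy_iz_i\right)}|\bar x\rangle|\bar y\rangle|\bar z\rangle,$$ i.e. transversal $\mathsf{CCZ}^{(q)}$ acts as $(\overline{\mathsf{CCZ}^{(q)}})^{\otimes q/4}$ on the logical qudits.
   Context: A qudit has Hilbert space $\mathbb C^q$ with basis $\{|x\rangle:x\in\mathbb F_q\}$. $\mathrm{tr}:\mathbb F_q\to\mathbb F_2$ is $\mathrm{tr}(x)=\sum_{i=0}^{l-1}x^{2^i}$ and $\mathsf{CCZ}^{(q)}|x\rangle|y\rangle|z\rangle=(-1)^{\mathrm{tr}(xyz)}|x\rangle|y\rangle|z\rangle$; $(\mathsf{CCZ}^{(q)})^{\otimes n}$ acts on three code blocks, coordinatewise. For linear codes $C_2^\perp\subseteq C_1\subseteq\mathbb F_q^n$, the CSS code $\mathrm{CSS}(C_1,C_2)$ is spanned by $\sum_{\alpha\in C_2^\perp}|c+\alpha\rangle$, $c\in C_1$, has dimension $\dim C_1-\dim C_2^\perp$ and distance equal to the minimum Hamming weight of $(C_1\setminus C_2^\perp)\cup(C_2\setminus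 C_1^\perp)$, with $\perp$ taken for the bilinear form $\sum_i u_iv_i$. *)

(* Defs.v *)
From HB Require Import structures.
From mathcomp Require Import all_boot all_order all_algebra.
From mathcomp Require Import algC.
Set Implicit Arguments. Unset Strict Implicit. Unset Printing Implicit Defensive.
Import Order.TTheory GRing.Theory Num.Theory.
Local Open Scope ring_scope.

(* Vectors of F^n are
   row vectors 'rV[F]_n; linear codes are row spaces of n x n matrices
   (mxalgebra, %MS).  Quantum states on one block of n qudits are
   functions 'rV[F]_n -> algC (amplitude of the basis state |u>). *)

Section Defs.
Variable F : finFieldType.

Definition ftrace (l : nat) (x : F) : F := \sum_(i < l) x ^+ (2 ^ i).

(* (-1)^t for t in F_2 (t = 0 or 1 in F). *)
Definition sgn1 (t : F) : algC := if t == 0 then 1 else -1.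

(* dual code w.r.t. the bilinear form sum_i u_i v_i:
   C^perp = {u | u *m v^T = 0 for all rows v of C} = row kernel of C^T. *)
Definition dualC n (C : 'M[F]_n) : 'M[F]_n := kermx C^T.

Definition wt n (u : 'rV[F]_n) : nat := #|[set i : 'I_n | u 0 i != 0]|.

Definition coset_state n (D : 'M[F]_n) (c : 'rV[F]_n) : 'rV[F]_n -> algC :=
  fun u => \sum_(a : 'rV[F]_n | (a <= D)%MS) (u == c + a)%:R.

(* psi lies in the code space of CSS(C1,C2), i.e. in the span of the
   coset states sum_{alpha in C2^perp} |c + alpha>, c in C1. *)
Definition in_css n (C1 C2 : 'M[F]_n) (psi : 'rV[F]_n -> algC) : Prop :=
  exists a : 'rV[F]_n -> algC, forall u,
    psi u = \sum_(c : 'rV[F]_n | (c <= C1)%MS) a c * coset_state (dualC C2) c u.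

Definition inner n (phi psi : 'rV[F]_n -> algC) : algC :=
  \sum_(u : 'rV[F]_n) (phi u)^* * psi u.

(* Eigenvalue of (CCZ^(q))^{(x) n} on |u>|v>|w> (it is diagonal):
   product over coordinates of (-1)^tr(u_i v_i w_i). *)
Definition ccz_n (l : nat) n (u v w : 'rV[F]_n) : algC :=
  \prod_(i < n) sgn1 (ftrace l (u 0 i * v 0 i * w 0 i)).

End Defs.

(* Main.v *)
Require Import Defs.
From HB Require Import structures.
From mathcomp Require Import all_boot all_order all_algebra all_field.
From mathcomp Require Import algC zify.
Set Implicit Arguments. Unset Strict Implicit. Unset Printing Implicit Defensive.
Import Order.TTheory GRing.Theory Num.Theory.
Local Open Scope ring_scope.


Section Poly.
Variable F : finFieldType.

Definition rowfun N (w : 'rV[F]_N) (j : nat) : F :=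
  if insub j is Some i then w 0 i else 0.
Definition polyr N (w : 'rV[F]_N) : {poly F} := \poly_(j < N) rowfun w j.

Lemma rowfunE N (w : 'rV[F]_N) (i : 'I_N) : rowfun w i = w 0 i.
Proof. by rewrite /rowfun valK. Qed.

Lemma horner_polyr N (w : 'rV[F]_N) x : (polyr w).[x] = \sum_(j < N) w 0 j * x ^+ j.
Proof. by rewrite /polyr horner_poly; apply: eq_bigr => i _; rewrite rowfunE. Qed.

Lemma size_polyr N (w : 'rV[F]_N) r :
  (forall j : 'I_N, (r <= j)%N -> w 0 j = 0) -> (size (polyr w) <= minn r N)%N.
Proof.
move=> H; rewrite leq_min size_poly andbT; apply/leq_sizeP => j hj.
rewrite coef_poly; case: ifP => // jN.
by rewrite /rowfun insubT /= H.
Qed.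

Lemma polyr_row N (P : {poly F}) : (size P <= N)%N -> polyr (\row_(j < N) P`_j) = P.
Proof.
move=> hs; apply/polyP => j; rewrite coef_poly; case: ifP => jN.
  by rewrite /rowfun insubT /= mxE.
by rewrite nth_default // (leq_trans hs) // leqNgt jN.
Qed.

Lemma poly_roots0 N (g : 'I_N -> F) (P : {poly F}) :
  injective g -> (size P <= N)%N -> (forall i, P.[g i] = 0) -> P = 0.
Proof.
move=> ig hs hr; apply/eqP; apply: contraT => nz.
have := max_poly_roots nz (rs := [seq g i | i <- enum 'I_N]).
rewrite map_inj_uniq // enum_uniq size_map size_enum_ord.
have -> : all (root P) [seq g i | i <- enum 'I_N].
  by apply/allP => x /mapP [i _ ->]; rewrite /root hr.
by move=> /(_ isT isT); rewrite ltnNge hs.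
Qed.

Definition vdm N (g : 'I_N -> F) : 'M[F]_N := \matrix_(j, i) (g i) ^+ j.

Lemma mul_vdm N (g : 'I_N -> F) (w : 'rV[F]_N) i :
  (w *m vdm g) 0 i = (polyr w).[g i].
Proof. by rewrite horner_polyr mxE; apply: eq_bigr => j _; rewrite mxE. Qed.

Lemma vdm_unit N (g : 'I_N -> F) : injective g -> vdm g \in unitmx.
Proof.
move=> ig; rewrite -row_free_unit -kermx_eq0; apply/rowV0P => v /sub_kermxP hv.
have P0 : polyr v = 0.
  apply: (poly_roots0 ig); first by rewrite size_poly.
  by move=> i; rewrite -mul_vdm hv mxE.
apply/rowP => j; rewrite mxE -rowfunE.
by have := congr1 (fun p : {poly F} => p`_j) P0; rewrite coef_poly ltn_ord coef0.
Qed.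

Lemma rowpid N r (w : 'rV[F]_N) j : (w *m pid_mx r) 0 j = if (j < r)%N then w 0 j else 0.
Proof.
rewrite mxE (bigD1 j) //= big1 ?addr0.
  by rewrite mxE eqxx /=; case: ifP; rewrite ?mulr1 ?mulr0.
by move=> i ij; rewrite mxE (_ : (i == j :> nat) = false) ?mulr0 //; exact/negbTE.
Qed.

Lemma dual_dual N (D : 'M[F]_N) : (dualC (dualC D) == D)%MS.
Proof.
have sub : (D <= dualC (dualC D))%MS.
  apply/sub_kermxP; rewrite /dualC.
  by rewrite -[X in X *m _]trmxK -trmx_mul mulmx_ker trmx0.
apply/andP; split=> //.
have := mxrank_leqif_sup sub.
rewrite /dualC mxrank_ker mxrank_tr mxrank_ker mxrank_tr subKn ?rank_leq_row //.
by move=> [_ <-].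
Qed.
End Poly.


Section Field.
Variable F : finFieldType.
Variable l : nat.
Hypothesis hF : #|F| = (2 ^ l)%N.
Hypothesis hl : (0 < l)%N.

Lemma char2 : (2 \in [pchar F])%N.
Proof. exact: (card_finPcharP hF). Qed.

Lemma two0 : (2%:R : F) = 0.
Proof. exact: pcharf0 char2. Qed.

Lemma dbl0 (x : F) : x *+ 2 = 0.
Proof. by rewrite -mulr_natr two0 mulr0. Qed.

Lemma sqrD2 (x y : F) : (x + y) ^+ 2 = x ^+ 2 + y ^+ 2.
Proof. by rewrite sqrrD dbl0 addr0. Qed.

Lemma frobD (x y : F) i : (x + y) ^+ (2 ^ i) = x ^+ (2 ^ i) + y ^+ (2 ^ i).
Proof.
elim: i => [|i IH]; first by rewrite !expr1.
by rewrite expnSr !exprM IH sqrD2.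
Qed.

Lemma ftraceD (x y : F) : ftrace l (x + y) = ftrace l x + ftrace l y.
Proof. by rewrite /ftrace -big_split; apply: eq_bigr => i _; rewrite frobD. Qed.

Lemma ftrace0 : ftrace l (0 : F) = 0.
Proof. by rewrite /ftrace big1 // => i _; rewrite expr0n expn_eq0. Qed.

Lemma ftrace_sq (x : F) : ftrace l x ^+ 2 = ftrace l x.
Proof.
rewrite /ftrace (big_morph (fun y : F => y ^+ 2) sqrD2 (expr0n _ _)).
have E := etrans (esym (big_ord_recl l (fun i : 'I_l.+1 => x ^+ (2 ^ i))))
                (big_ord_recr l (fun i : 'I_l.+1 => x ^+ (2 ^ i))).
rewrite /= -hF expf_card expn0 expr1 in E.
have -> : \sum_(i < l) (x ^+ (2 ^ i)) ^+ 2 = \sum_(i < l) x ^+ (2 ^ bump 0 i).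
  by apply: eq_bigr => i _; rewrite -exprM -expnSr.
by apply: (addIr x); rewrite addrC E.
Qed.

Lemma ftrace01 (x : F) : ftrace l x = 0 \/ ftrace l x = 1.
Proof.
have H := ftrace_sq x; rewrite expr2 in H.
have : ftrace l x * (ftrace l x - 1) == 0 by rewrite mulrBr mulr1 H subrr.
by rewrite mulf_eq0 subr_eq0; case/orP => /eqP E; [left|right].
Qed.

Lemma sgn1D (a b : F) : (a = 0 \/ a = 1) -> (b = 0 \/ b = 1) ->
  sgn1 (a + b) = sgn1 a * sgn1 b.
Proof.
rewrite /sgn1 => [[]] -> [] ->; rewrite ?addr0 ?add0r ?eqxx ?oner_eq0 ?mul1r ?mulr1 //.
by rewrite -mulr2n dbl0 eqxx mulrNN mulr1.
Qed.

Lemma sgn1_tr_sum N (f : 'I_N -> F) :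
  \prod_(i < N) sgn1 (ftrace l (f i)) = sgn1 (ftrace l (\sum_(i < N) f i)).
Proof.
symmetry; apply: (big_morph (fun y => sgn1 (ftrace l y))).
  by move=> a b /=; rewrite ftraceD sgn1D //; apply: ftrace01.
by rewrite ftrace0 /sgn1 eqxx.
Qed.

Lemma card0 : (#|F|%:R : F) = 0.
Proof. by rewrite hF natrX two0 expr0n; case: l hl. Qed.

Lemma sum_pow j : (j < #|F|.-1)%N -> \sum_(a : F) a ^+ j = 0.
Proof.
move=> hj; case: j hj => [|j] hj.
  by rewrite (eq_bigr (fun _ => 1)) ?sumr_const ?card0 // => a _; rewrite expr0.
have : [exists c : F, (c != 0) && (c ^+ j.+1 != 1)].
  apply: contraT; rewrite negb_exists => /forallP H.
  have pnz : ('X^(j.+1) - 1 : {poly F}) != 0.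
    by rewrite -size_poly_eq0 -polyC1 size_XnsubC.
  have := max_poly_roots pnz (rs := enum (predC1 (0 : F))).
  rewrite enum_uniq -polyC1 size_XnsubC // -cardE cardC1.
  have -> : all (root ('X^(j.+1) - 1%:P)) (enum (predC1 (0 : F))).
    apply/allP => c; rewrite mem_enum /= => cnz.
    have := H c; rewrite (cnz : c != 0) /= negbK => /eqP hc.
    by rewrite /root !hornerE hc subrr.
  by move=> /(_ isT isT); rewrite ltnS leqNgt hj.
case/existsP => c /andP [cnz cj].
set S := \sum_(a : F) a ^+ j.+1.
have : (c ^+ j.+1 - 1) * S == 0.
  rewrite mulrBl mul1r subr_eq0 /S {2}(reindex_inj (mulfI cnz)) /= mulr_sumr.
  by apply/eqP; apply: eq_bigr => a _; rewrite exprMn.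
by rewrite mulf_eq0 subr_eq0 (negbTE cj) /= => /eqP.
Qed.

Lemma sum_poly (Q : {poly F}) : (size Q <= #|F|.-1)%N -> \sum_(a : F) Q.[a] = 0.
Proof.
move=> hs.
rewrite (eq_bigr (fun a => \sum_(j < size Q) Q`_j * a ^+ j)); last first.
  by move=> a _; rewrite horner_coef.
rewrite exchange_big big1 // => j _; rewrite -mulr_sumr sum_pow ?mulr0 //.
exact: leq_trans (ltn_ord j) hs.
Qed.

End Field.


Section Enum.
Variable F : finFieldType.
Variables n k : nat.
Hypothesis hnk : (n + k)%N = #|F|.

Definition enumF (i : nat) : F := nth 0 (enum F) i.
Definition alpha (i : 'I_n) : F := enumF i.
Definition beta (j : 'I_k) : F := enumF (n + j).

Lemma enumF_inj i j : (i < #|F|)%N -> (j < #|F|)%N -> enumF i = enumF j -> i = j.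
Proof.
move=> hi hj /eqP; rewrite /enumF nth_uniq ?enum_uniq -?cardE //; exact: eqP.
Qed.

Lemma alpha_inj : injective alpha.
Proof.
move=> i j /enumF_inj; rewrite -hnk => H; apply: val_inj; apply: H.
  exact: ltn_addr.
exact: ltn_addr.
Qed.

Lemma beta_inj : injective beta.
Proof.
move=> i j /enumF_inj; rewrite -hnk !ltn_add2l => H; apply: val_inj.
by have /eqP := H (ltn_ord i) (ltn_ord j); rewrite eqn_add2l => /eqP.
Qed.

Lemma alpha_beta i j : alpha i != beta j.
Proof.
apply/eqP => /enumF_inj; rewrite -hnk ltn_add2l ltn_ord => /(_ (ltn_addr _ (ltn_ord i)) isT).
by move=> E; have := ltn_ord i; rewrite E ltnNge leq_addr.
Qed.

Lemma sum_split (f : F -> algC) : True.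
Proof. by []. Qed.

Lemma sum_splitF (f : F -> F) :
  \sum_(a : F) f a = \sum_(i < n) f (alpha i) + \sum_(j < k) f (beta j).
Proof.
have -> : \sum_(a : F) f a = \sum_(a <- enum F) f a.
  by rewrite big_enum /=.
rewrite -(mkseq_nth 0 (enum F)) -cardE -hnk /mkseq iotaD map_cat big_cat /= !big_map.
rewrite add0n -[in iota n _](addn0 n) iotaDl big_map /alpha /beta /enumF.
rewrite -(big_mkord xpredT (fun j => f (nth 0 (enum F) j))).
rewrite -(big_mkord xpredT (fun j => f (nth 0 (enum F) (n + j)))).
by rewrite /index_iota !subn0.
Qed.
End Enum.


Section Code.
Variable F : finFieldType.
Variables n k m : nat.
Hypothesis hnk : (n + k)%N = #|F|.
Hypothesis hkm : (k <= m)%N.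
Hypothesis hmn : (m <= n)%N.

Local Notation al := (@alpha F n).
Local Notation be := (@beta F n k).

Definition Vp : {poly F} := \prod_(z <- [seq be j | j <- enum 'I_k]) ('X - z%:P).
Definition evalv (P : {poly F}) : 'rV[F]_n := \row_i P.[al i].
Definition C1 : 'M[F]_n := pid_mx m *m vdm al.
Definition dv : 'rV[F]_n := \row_i Vp.[al i].
Definition Dm : 'M[F]_n := pid_mx (m - k) *m (vdm al *m diag_mx dv).

Lemma Vp_root j : Vp.[be j] = 0.
Proof. by apply/eqP; rewrite -/(root _ _) root_prod_XsubC map_f ?mem_enum. Qed.

Lemma Vp_nz i : Vp.[al i] != 0.
Proof.
rewrite -/(root _ _) root_prod_XsubC; apply/mapP => [[j _ E]].
by have := alpha_beta hnk i j; rewrite E eqxx.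
Qed.

Lemma size_Vp : size Vp = k.+1.
Proof. by rewrite size_prod_XsubC size_map size_enum_ord. Qed.

Lemma Vp_neq0 : Vp != 0.
Proof. by rewrite -size_poly_eq0 size_Vp. Qed.

Lemma evalvB (P Q : {poly F}) : evalv (P - Q) = evalv P - evalv Q.
Proof. by apply/rowP => i; rewrite !mxE hornerD hornerN. Qed.

Lemma evalv0 (P : {poly F}) : (size P <= n)%N -> evalv P = 0 -> P = 0.
Proof.
move=> hs E; apply: (poly_roots0 (alpha_inj hnk) hs) => i.
by have := congr1 (fun u : 'rV_n => u 0 i) E; rewrite !mxE.
Qed.

Lemma memC1 (u : 'rV[F]_n) :
  (u <= C1)%MS <-> exists P : {poly F}, (size P <= m)%N /\ u = evalv P.
Proof.
split.
  case/submxP => w ->; exists (polyr (w *m (pid_mx m : 'M_n))); split.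
    apply: leq_trans (size_polyr _) (geq_minl _ _) => j jm.
    by rewrite rowpid ltnNge jm.
  by apply/rowP => i; rewrite mulmxA mul_vdm mxE.
case=> P [hs ->]; apply/submxP; exists (\row_(j < n) P`_j).
have E : \row_(j < n) P`_j *m (pid_mx m : 'M_n) = \row_(j < n) P`_j.
  apply/rowP => j; rewrite rowpid mxE; case: ifP => // /negbT.
  by rewrite -leqNgt => jm; rewrite nth_default // (leq_trans hs).
apply/rowP => i; rewrite mulmxA E mul_vdm polyr_row ?mxE //.
exact: leq_trans hs hmn.
Qed.

Lemma memD (u : 'rV[F]_n) :
  (u <= Dm)%MS <-> exists g : {poly F}, (size g <= m - k)%N /\ u = evalv (Vp * g).
Proof.
split.
  case/submxP => w ->; exists (polyr (w *m (pid_mx (m - k) : 'M_n))); split.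
    apply: leq_trans (size_polyr _) (geq_minl _ _) => j jm.
    by rewrite rowpid ltnNge jm.
  apply/rowP => i; rewrite !mulmxA mul_mx_diag mxE mul_vdm /dv mxE.
  by rewrite mxE hornerM mulrC.
case=> P [hs ->]; apply/submxP; exists (\row_(j < n) P`_j).
have E : \row_(j < n) P`_j *m (pid_mx (m - k) : 'M_n) = \row_(j < n) P`_j.
  apply/rowP => j; rewrite rowpid mxE; case: ifP => // /negbT.
  by rewrite -leqNgt => jm; rewrite nth_default // (leq_trans hs).
apply/rowP => i; rewrite !mulmxA E mul_mx_diag [RHS]mxE mul_vdm /dv mxE polyr_row.
  by rewrite mxE hornerM mulrC.
apply: leq_trans hs _; apply: leq_trans hmn; exact: leq_subr.
Qed.

Lemma vdm_al_unit : vdm al \in unitmx.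
Proof. exact: vdm_unit (alpha_inj hnk). Qed.

Lemma rank_C1 : \rank C1 = m.
Proof.
by rewrite /C1 mxrankMfree ?row_free_unit ?vdm_al_unit // rank_pid_mx.
Qed.

Lemma rank_D : \rank Dm = (m - k)%N.
Proof.
have hd : (m - k <= n)%N by apply: leq_trans (leq_subr _ _) hmn.
rewrite /Dm mxrankMfree ?rank_pid_mx //.
rewrite row_free_unit unitmx_mul vdm_al_unit /= unitmxE det_diag unitfE.
by rewrite prodf_seq_neq0; apply/allP => i _; rewrite mxE Vp_nz.
Qed.

Lemma D_sub_C1 : (Dm <= C1)%MS.
Proof.
apply/rV_subP => u /memD [g [hg ->]]; apply/memC1; exists (Vp * g); split=> //.
have [->|gnz] := eqVneq g 0; first by rewrite mulr0 size_poly0.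
apply: leq_trans (size_polyMleq _ _) _; rewrite size_Vp addSn /=.
by rewrite -(subnKC hkm) leq_add2l.
Qed.


Lemma wt_C1 (u : 'rV[F]_n) : (u <= C1)%MS -> u != 0 -> (n - m < wt u)%N.
Proof.
move=> /memC1 [P [hs E]] unz.
have Pnz : P != 0 by apply: contraNneq unz => P0; apply/eqP; rewrite E P0; apply/rowP => i; rewrite !mxE horner0.
set Z := [set i | u 0 i == 0].
have hZ : (#|Z| < m)%N.
  have := max_poly_roots Pnz (rs := [seq al i | i <- enum Z]).
  rewrite map_inj_uniq ?enum_uniq; last exact: alpha_inj hnk.
  rewrite size_map -cardE.
  have -> : all (root P) [seq al i | i <- enum Z].
    apply/allP => x /mapP [i]; rewrite mem_enum inE E mxE => /eqP h ->.
    by rewrite /root h.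
  by move=> /(_ isT isT) h; apply: leq_trans h hs.
have hc := cardsC Z; rewrite card_ord in hc.
have -> : wt u = #|~: Z|.
  by rewrite /wt; apply: eq_card => i; rewrite !inE.
by move: hc hZ; lia.
Qed.



Lemma orth_D (u : 'rV[F]_n) (g : {poly F}) : (u <= dualC Dm)%MS -> (size g <= m - k)%N ->
  \sum_(i < n) u 0 i * (Vp * g).[al i] = 0.
Proof.
move=> /sub_kermxP hu hg.
have /submxP [w hw] : (evalv (Vp * g) <= Dm)%MS by apply/memD; exists g.
have : (u *m (evalv (Vp * g))^T) 0 0 = 0.
  by rewrite hw trmx_mul mulmxA hu mul0mx mxE.
move=> H; rewrite -[RHS]H mxE; by apply: eq_bigr => i _; rewrite !mxE.
Qed.

Lemma wt_C2 (u : 'rV[F]_n) : (u <= dualC Dm)%MS -> u != 0 -> (m - k < wt u)%N.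
Proof.
move=> hu unz; rewrite ltnNge; apply/negP => hw.
have [i0 ui0] : exists i0, u 0 i0 != 0.
  apply/existsP; apply: contraR unz; rewrite negb_exists => /forallP H.
  by apply/eqP/rowP => i; rewrite mxE; have := H i; rewrite negbK => /eqP.
set S := [set i | u 0 i != 0].
have i0S : i0 \in S by rewrite inE.
set g := \prod_(z <- [seq al i | i <- enum (S :\ i0)]) ('X - z%:P).
have hg : (size g <= m - k)%N.
  rewrite size_prod_XsubC size_map -cardE.
  by move: hw; rewrite /wt -/S (cardsD1 i0 S) i0S.
have E := orth_D hu hg.
have E2 : \sum_(i < n | i != i0) u 0 i * (Vp * g).[al i] = 0.
  apply: big1 => i ii0; case: (boolP (i \in S)) => iS.
    have : root g (al i) by rewrite root_prod_XsubC map_f // mem_enum in_setD1 ii0 iS.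
    by rewrite hornerM => /eqP ->; rewrite !mulr0.
  by move: iS; rewrite inE negbK => /eqP ->; rewrite mul0r.
rewrite (bigD1 i0) //= E2 addr0 in E.
have : u 0 i0 * (Vp * g).[al i0] != 0.
  rewrite hornerM !mulf_neq0 ?Vp_nz //.
  rewrite -/(root _ _) root_prod_XsubC mem_map ?mem_enum ?inE ?eqxx //.
  exact: alpha_inj hnk.
by rewrite E eqxx.
Qed.


Definition fx (x : 'rV[F]_k) : {poly F} := polyr (x *m invmx (vdm be)).
Definition cx (x : 'rV[F]_k) : 'rV[F]_n := evalv (fx x).

Lemma fx_beta x j : (fx x).[be j] = x 0 j.
Proof. by rewrite /fx -mul_vdm mulmxKV // vdm_unit //; exact: beta_inj hnk. Qed.

Lemma size_fx x : (size (fx x) <= m)%N.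
Proof. exact: leq_trans (size_poly _ _) hkm. Qed.

Lemma cx_C1 x : (cx x <= C1)%MS.
Proof. by apply/memC1; exists (fx x); rewrite size_fx. Qed.

Lemma size_Vpg (g : {poly F}) : (size g <= m - k)%N -> (size (Vp * g)%R <= m)%N.
Proof.
move=> hg; have [->|gnz] := eqVneq g 0; first by rewrite mulr0 size_poly0.
apply: leq_trans (size_polyMleq _ _) _; rewrite size_Vp addSn /=.
by rewrite -(subnKC hkm) leq_add2l.
Qed.

Lemma cx_inj x y : (cx x - cx y <= Dm)%MS -> x = y.
Proof.
move=> /memD [g [hg E]].
have P0 : fx x - fx y - Vp * g = 0.
  apply: evalv0; first by rewrite (leq_trans _ hmn) // (leq_trans (size_polyD _ _)) // geq_max
    (leq_trans (size_polyD _ _)) ?geq_max ?size_polyN ?size_fx ?size_Vpg.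
  by rewrite !evalvB -E /cx subrr.
apply/rowP => j; have := congr1 (fun p : {poly F} => p.[be j]) P0.
rewrite !hornerE !fx_beta Vp_root mul0r subr0 => /eqP.
by rewrite subr_eq0 => /eqP.
Qed.

Lemma exists_x (c : 'rV[F]_n) : (c <= C1)%MS -> exists x, (c - cx x <= Dm)%MS.
Proof.
move=> /memC1 [P [hs ->]]; exists (\row_j P.[be j]).
set Q := P - fx (\row_j P.[be j]).
have hQ : Vp %| Q.
  apply: uniq_roots_dvdp; last first.
    by rewrite uniq_rootsE map_inj_uniq ?enum_uniq //; exact: beta_inj hnk.
  apply/allP => z /mapP [j _ ->]; rewrite /root /Q !hornerE fx_beta mxE subrr //.
apply/memD; exists (Q %/ Vp); split.
  rewrite size_divp ?Vp_neq0 // size_Vp /= leq_sub2r //.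
  by rewrite /Q (leq_trans (size_polyD _ _)) // geq_max hs size_polyN size_fx.
by rewrite divpKC // /Q /cx evalvB.
Qed.

Lemma decomp x (u : 'rV[F]_n) : (u - cx x <= Dm)%MS ->
  exists P : {poly F}, [/\ (size P <= m)%N, u = evalv P & forall j, P.[be j] = x 0 j].
Proof.
move=> /memD [g [hg E]]; exists (fx x + Vp * g); split.
- by rewrite (leq_trans (size_polyD _ _)) // geq_max size_fx size_Vpg.
- apply/rowP => i; have := congr1 (fun v : 'rV_n => v 0 i) E.
  by rewrite !mxE hornerD => <-; rewrite addrCA subrr addr0.
- by move=> j; rewrite hornerD hornerM Vp_root mul0r addr0 fx_beta.
Qed.


Definition ND : nat := #|[set a : 'rV[F]_n | (a <= Dm)%MS]|.
Definition sN : algC := sqrtC (ND%:R).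
Definition bar (x : 'rV[F]_k) (u : 'rV[F]_n) : algC := ((u - cx x <= Dm)%MS)%:R / sN.

Lemma ND_gt0 : (0 < ND)%N.
Proof. by apply/card_gt0P; exists 0; rewrite inE sub0mx. Qed.

Lemma sN_neq0 : sN != 0.
Proof. by rewrite sqrtC_eq0 pnatr_eq0 -lt0n ND_gt0. Qed.

Lemma sN_conj : sN^* = sN.
Proof. by apply: conj_Creal; apply: sqrtC_real; apply: ler0n. Qed.

Lemma sNV_conj : (sN^-1)^* = sN^-1.
Proof. by apply: conj_Creal; rewrite rpredV; apply: sqrtC_real; apply: ler0n. Qed.

Lemma sN_sq : sN * sN = ND%:R.
Proof. by rewrite -expr2 sqrtCK. Qed.

Lemma cs_eq (D' : 'M[F]_n) : (forall a : 'rV[F]_n, (a <= D')%MS = (a <= Dm)%MS) ->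
  forall c u, coset_state D' c u = ((u - c <= Dm)%MS)%:R.
Proof.
move=> hD c u; rewrite /coset_state (eq_bigl (fun a : 'rV[F]_n => (a <= Dm)%MS)) //.
case: (boolP (u - c <= Dm)%MS) => h.
  rewrite (bigD1 (u - c)) //= (addrC c) subrK eqxx big1 ?addr0 // => a /andP [_ ne].
  by case: eqP => // E; move: ne; rewrite E addrC addKr eqxx.
by apply: big1 => a ha; case: eqP => // E; move: h; rewrite E addrC addKr ha.
Qed.

Lemma count_coset (c : 'rV[F]_n) : \sum_(u : 'rV[F]_n) ((u - c <= Dm)%MS)%:R = ND%:R :> algC.
Proof.
rewrite (reindex_inj (addIr c)) /=.
under eq_bigr do rewrite addrK.
rewrite -natr_sum /ND -sum1_card; congr (_%:R).
by rewrite [RHS]big_mkcond; apply: eq_bigr => u _; rewrite inE; case: (u <= Dm)%MS.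
Qed.

Lemma bar_inner x y : inner (bar x) (bar y) = (x == y)%:R.
Proof.
rewrite /inner /bar.
under eq_bigr do rewrite rmorphM /= rmorph_nat sNV_conj mulrACA -invfM sN_sq -natrM.
rewrite -mulr_suml; case: eqP => [<-|ne].
  under eq_bigr do rewrite mulnb andbb.
  by rewrite count_coset mulfV // pnatr_eq0 -lt0n ND_gt0.
rewrite big1 ?mul0r // => u _; rewrite mulnb.
case: (boolP (u - cx x <= Dm)%MS) => // h1; case: (boolP (u - cx y <= Dm)%MS) => // h2.
exfalso; apply: ne; apply: cx_inj.
have -> : cx x - cx y = (u - cx y) - (u - cx x).
  by rewrite [RHS]addrC opprB addrA subrK.
by apply: addmx_sub => //; rewrite eqmx_opp.
Qed.


Lemma hDD (a : 'rV[F]_n) : (a <= dualC (dualC Dm))%MS = (a <= Dm)%MS.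
Proof.
have /andP [h1 h2] := dual_dual Dm.
by apply/idP/idP => h; [exact: submx_trans h h1 | exact: submx_trans h h2].
Qed.

Lemma bar_css x : in_css C1 (dualC Dm) (bar x).
Proof.
exists (fun c => if c == cx x then sN^-1 else 0) => u.
rewrite (bigD1 (cx x)) ?cx_C1 //= eqxx big1 ?addr0.
  by rewrite (cs_eq hDD) mulrC.
by move=> c /andP [_ /negbTE ->]; rewrite mul0r.
Qed.

Definition xc (c : 'rV[F]_n) := [pick x | (c - cx x <= Dm)%MS].

Lemma bar_span psi : in_css C1 (dualC Dm) psi ->
  exists b : 'rV[F]_k -> algC, forall u, psi u = \sum_x b x * bar x u.
Proof.
case=> a ha.
exists (fun x => sN * \sum_(c | (c <= C1)%MS) ((xc c == Some x))%:R * a c) => u.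
have E : forall c, (c <= C1)%MS -> a c * coset_state (dualC (dualC Dm)) c u =
    \sum_x ((xc c == Some x))%:R * a c * ((u - cx x <= Dm)%MS)%:R.
  move=> c hc; rewrite (cs_eq hDD) /xc; case: pickP => [x0 hx0|none]; last first.
    by have [x hx] := exists_x hc; have := none x; rewrite hx.
  rewrite (bigD1 x0) //= eqxx mul1r big1 ?addr0; last first.
    by move=> x ne; rewrite (inj_eq (@Some_inj _)) eq_sym (negbTE ne) !mul0r.
  have S1 : (u - c <= Dm)%MS -> (u - cx x0 <= Dm)%MS.
    move=> h; have -> : u - cx x0 = (u - c) + (c - cx x0) by rewrite addrA subrK.
    exact: addmx_sub.
  have S2 : (u - cx x0 <= Dm)%MS -> (u - c <= Dm)%MS.
    move=> h; have -> : u - c = (u - cx x0) - (c - cx x0) by rewrite opprB addrA subrK.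
    by apply: addmx_sub => //; rewrite eqmx_opp.
  by case: (boolP (u - c <= Dm)%MS) => h1; case: (boolP (u - cx x0 <= Dm)%MS) => h2 //;
    [have := S1 h1 | have := S2 h2]; rewrite ?(negbTE h1) ?(negbTE h2).
rewrite ha (eq_bigr _ E) exchange_big; apply: eq_bigr => x _.
rewrite -mulr_suml /bar mulrC -!mulrA.
by rewrite [RHS]mulrC -mulrA divfK ?sN_neq0 // mulrC.
Qed.


Lemma ccz_key l (hF : #|F| = (2 ^ l)%N) (hl : (0 < l)%N) (h3m : (3 * m <= #|F|)%N)
  x y z (u v w : 'rV[F]_n) :
  (u - cx x <= Dm)%MS -> (v - cx y <= Dm)%MS -> (w - cx z <= Dm)%MS ->
  ccz_n l u v w = sgn1 (ftrace l (\sum_(j < k) x 0 j * y 0 j * z 0 j)).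
Proof.
move=> /decomp [P1 [s1 -> e1]] /decomp [P2 [s2 -> e2]] /decomp [P3 [s3 -> e3]].
rewrite /ccz_n sgn1_tr_sum //.
set Q := P1 * P2 * P3.
have hQ : (size Q <= #|F|.-1)%N.
  apply: leq_trans (size_polyMleq _ _) _.
  have := size_polyMleq P1 P2; move: s1 s2 s3 h3m; lia.
have := sum_poly hF hl hQ; rewrite (sum_splitF hnk) => /eqP.
rewrite addr_eq0 oppr_pchar2 ?(char2 hF) // => /eqP E.
congr (sgn1 (ftrace l _)).
transitivity (\sum_(i < n) Q.[al i]).
  by apply: eq_bigr => i _; rewrite !mxE !hornerM.
by rewrite E; apply: eq_bigr => j _; rewrite !hornerM e1 e2 e3.
Qed.

End Code.

Unset Implicit Arguments.


Theorem theorem5p1 (l : nat) (hl : (3 <= l)%N) (F : finFieldType)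
    (hF : #|F| = (2 ^ l)%N) :
  exists (C1 C2 : 'M[F]_(3 * 2 ^ l %/ 4))
         (bar : 'rV[F]_(2 ^ l %/ 4) -> 'rV[F]_(3 * 2 ^ l %/ 4) -> algC),
    [/\ (dualC C2 <= C1)%MS,
        (\rank C1 - \rank (dualC C2))%N = (2 ^ l %/ 4)%N,
        (forall u : 'rV[F]_(3 * 2 ^ l %/ 4),
            ((u <= C1)%MS && ~~ (u <= dualC C2)%MS)
            || ((u <= C2)%MS && ~~ (u <= dualC C1)%MS) ->
            (2 ^ l %/ 3 - 2 ^ l %/ 4 + 1 <= wt u)%N) &
    [/\
        (forall x, in_css C1 C2 (bar x)),
        (forall x y, inner (bar x) (bar y) = (x == y)%:R),
        (forall psi, in_css C1 C2 psi ->
           exists b : 'rV[F]_(2 ^ l %/ 4) -> algC,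
             forall u, psi u = \sum_x b x * bar x u) &
        (forall x y z (u v w : 'rV[F]_(3 * 2 ^ l %/ 4)),
           ccz_n l u v w * (bar x u * bar y v * bar z w)
           = sgn1 (ftrace l (\sum_(i < 2 ^ l %/ 4) x 0 i * y 0 i * z 0 i))
             * (bar x u * bar y v * bar z w))]].
Proof.
have hq : (2 ^ l = 8 * 2 ^ (l - 3))%N by rewrite -{1}(subnKC hl) expnD.
have ht : (0 < 2 ^ (l - 3))%N by rewrite expn_gt0.
have hl0 : (0 < l)%N by apply: leq_trans hl.
set n := (3 * 2 ^ l %/ 4)%N; set k := (2 ^ l %/ 4)%N; set m := (2 ^ l %/ 3)%N.
have hnk : (n + k)%N = #|F| by rewrite hF /n /k hq; move: ht; lia.
have hkm : (k <= m)%N by rewrite /k /m hq; move: ht; lia.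
have hmn : (m <= n)%N by rewrite /n /m hq; move: ht; lia.
have h3m : (3 * m <= #|F|)%N by rewrite hF /m hq; move: ht; lia.
have d1 : (2 ^ l %/ 3 - 2 ^ l %/ 4 + 1 <= n - m + 1)%N by rewrite /n /m hq; move: ht; lia.
have d2 : (2 ^ l %/ 3 - 2 ^ l %/ 4 + 1 <= m - k + 1)%N by rewrite /k /m; lia.
exists (C1 F n m), (dualC (Dm F n k m)), (@bar F n k m).
have eqD := dual_dual (Dm F n k m).
split.
- apply: submx_trans (D_sub_C1 F hkm hmn); exact: (proj1 (andP eqD)).
- by rewrite (eqmx_rank eqD) (rank_C1 hnk hmn) (rank_D hnk hmn); move: hkm; lia.
- move=> u /orP [/andP [hu hnd] | /andP [hu hnd]].
    have unz : u != 0 by apply: contraNneq hnd => ->; rewrite sub0mx.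
    have := wt_C1 hnk hkm hmn hu unz; move: d1; lia.
  have unz : u != 0 by apply: contraNneq hnd => ->; rewrite sub0mx.
  have := wt_C2 hnk hmn hu unz; move: d2; lia.
split.
- exact: bar_css.
- exact: bar_inner.
- exact: bar_span.
- move=> x y z u v w; rewrite /bar.
  have F0 : ((false)%:R : algC) = 0 by [].
  case: (boolP (u - @cx F n k x <= Dm F n k m)%MS) => hu; last by rewrite F0 !(mul0r, mulr0).
  case: (boolP (v - @cx F n k y <= Dm F n k m)%MS) => hv; last by rewrite F0 !(mul0r, mulr0).
  case: (boolP (w - @cx F n k z <= Dm F n k m)%MS) => hw; last by rewrite F0 !(mul0r, mulr0).
  by rewrite (ccz_key hnk hkm hmn hF hl0 h3m hu hv hw).
Qed.
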